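(* Let $|\psi\rangle$ be a pure three-qubit state with two-qubit reduced states $\rho_{AB},\rho_{AC},\rho_{BC}$. Then $S_{AB}>S_{AC}>S_{BC}$ if and only if $\mathcal C_{AB}>\mathcal C_{AC}>\mathcal C_{BC}$.
   Context: For a two-qubit state $\rho$ let $t_{kl}=\mathrm{Tr}[\rho\,\sigma_k\otimes\sigma_l]$ ($\sigma_k$ Pauli matrices) and $S(\rho)=\sum_{k,l=1}^3 t_{kl}^2$; $S_{ij}=S(\rho_{ij})$. $\mathcal C_{ij}$ denotes the (Wootters) concurrence of $\rho_{ij}$: $\mathcal C(\rho)=\max\{0,\lambda_1-\lambda_2-\lambda_3-\lambda_4\}$, where $\lambda_1\ge\dots\ge\lambda_4$ are the square roots of the eigenvalues of $\rho(\sigma_2\otimes\sigma_2)\rho^*(\sigma_2\otimes\sigma_2)$. *)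

(* Defs.v *)
From HB Require Import structures.
From mathcomp Require Import all_boot all_order all_algebra.
From mathcomp Require Import reals.
From mathcomp Require Import complex mxtens.
Set Implicit Arguments. Unset Strict Implicit. Unset Printing Implicit Defensive.
Import Order.TTheory GRing.Theory Num.Theory.
Local Open Scope ring_scope.
Local Open Scope complex_scope.

Section Qubits.
Variable R : realType.
Local Notation C := R[i].

Definition pauli_x : 'M[C]_2 := \matrix_(i < 2, j < 2) (if i == j then 0 else 1).
Definition pauli_y : 'M[C]_2 :=
  \matrix_(i < 2, j < 2)
    (if i == j then 0 else if (i == 0 :> nat) then - 'i else 'i).
Definition pauli_z : 'M[C]_2 :=
  \matrix_(i < 2, j < 2)
    (if i == j then (if (i == 0 :> nat) then 1 else -1) else 0).

(* sigma k for k = 0,1,2 stands for sigma_{k+1}. *)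
Definition pauli (k : 'I_3) : 'M[C]_2 :=
  if (k == 0 :> nat) then pauli_x else if (k == 1 :> nat) then pauli_y
  else pauli_z.

(* Two-qubit operators act on C^2 (x) C^2, the basis |a b> having index
   2a + b (the convention of tensmx / mxtens_index). *)

(* Given an amplitude function f x y z, the reduced state on (x,y) obtained
   by tracing out z from |f><f|:  rho[(x,y),(x',y')] = sum_z f x y z conj(f x' y' z). *)
Definition reduce (f : 'I_2 -> 'I_2 -> 'I_2 -> C) : 'M[C]_(2 * 2) :=
  \matrix_(i, j) \sum_(z < 2)
     f (mxtens_unindex i).1 (mxtens_unindex i).2 z
     * (f (mxtens_unindex j).1 (mxtens_unindex j).2 z)^*.

(* psi a b c = <abc|psi>, qubits A, B, C. *)
Definition rhoAB (psi : 'I_2 -> 'I_2 -> 'I_2 -> C) := reduce psi.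
Definition rhoAC (psi : 'I_2 -> 'I_2 -> 'I_2 -> C) :=
  reduce (fun a c b => psi a b c).
Definition rhoBC (psi : 'I_2 -> 'I_2 -> 'I_2 -> C) :=
  reduce (fun b c a => psi a b c).

(* t_{kl} = Tr[rho sigma_k (x) sigma_l] (a real number for Hermitian rho;
   we take its real part to land in R). *)
Definition tcorr (rho : 'M[C]_(2 * 2)) (k l : 'I_3) : R :=
  @complex.Re R (\tr (rho *m (pauli k *t pauli l))).

Definition Sval (rho : 'M[C]_(2 * 2)) : R :=
  \sum_(k < 3) \sum_(l < 3) tcorr rho k l ^+ 2.

Definition wootters_mx (rho : 'M[C]_(2 * 2)) : 'M[C]_(2 * 2) :=
  rho *m (pauli_y *t pauli_y) *m map_mx Num.conj rho *m (pauli_y *t pauli_y).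

(* The eigenvalues (with algebraic multiplicity) of a square matrix:
   the roots of its characteristic polynomial, which splits over C. *)
Definition eigenvalues (n : nat) (M : 'M[C]_n) : seq C :=
  sval (closed_field_poly_normal (char_poly M)).

(* lambda_1 >= ... >= lambda_4: square roots of the eigenvalues of the
   Wootters matrix (which are nonnegative reals), in decreasing order. *)
Definition wootters_lambdas (rho : 'M[C]_(2 * 2)) : seq R :=
  sort (fun x y : R => y <= x)
       [seq Num.sqrt (@complex.Re R z) | z <- eigenvalues (wootters_mx rho)].

Definition concurrence (rho : 'M[C]_(2 * 2)) : R :=
  let l := wootters_lambdas rho in
  Num.max 0 (l`_0 - l`_1 - l`_2 - l`_3).

End Qubits.

(* Main.v *)
Require Import Defs.
From HB Require Import structures.
From mathcomp Require Import all_boot all_order all_algebra.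
From mathcomp Require Import reals.
From mathcomp Require Import complex mxtens.
From mathcomp Require Import ring lra.
Import Order.TTheory GRing.Theory Num.Theory.
Local Open Scope ring_scope.
Local Open Scope complex_scope.



Lemma sylv (F : fieldType) m n (A : 'M[F]_(m,n)) (B : 'M[F]_(n,m)) :
  'X^n * char_poly (A *m B) = 'X^m * char_poly (B *m A).
Proof.
set A' := map_mx polyC A; set B' := map_mx polyC B.
have cAB : char_poly (A *m B) = \det ('X%:M - A' *m B') by rewrite /char_poly /char_poly_mx map_mxM.
have cBA : char_poly (B *m A) = \det ('X%:M - B' *m A') by rewrite /char_poly /char_poly_mx map_mxM.
set N := block_mx ('X%:M : 'M_m) A' B' (1%:M : 'M_n).
set N' := block_mx (1%:M : 'M_m) A' B' ('X%:M : 'M_n).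
have dN : \det N = char_poly (A *m B).
  have -> : N = block_mx 1%:M A' 0 1%:M *m block_mx ('X%:M - A' *m B') 0 B' 1%:M.
    by rewrite mulmx_block ?mulmx_block ?mul1mx ?mul0mx ?mulmx0 ?mulmx1 ?add0r ?addr0 subrK.
  by rewrite det_mulmx det_ublock det_lblock !det1 !mulr1 mul1r cAB.
have dN' : \det N' = char_poly (B *m A).
  have -> : N' = block_mx 1%:M 0 B' 1%:M *m block_mx 1%:M A' 0 ('X%:M - B' *m A').
    by rewrite mulmx_block ?mulmx_block ?mul1mx ?mul0mx ?mulmx0 ?mulmx1 ?add0r ?addr0 addrC subrK.
  by rewrite det_mulmx det_ublock det_lblock !det1 !mul1r cBA.
have e : block_mx 1%:M 0 0 ('X%:M) *m N = N' *m block_mx ('X%:M) 0 0 1%:M.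
  rewrite mulmx_block mulmx_block ?mul1mx !mul0mx !mulmx0 !mulmx1 !add0r !addr0.
  by rewrite scalar_mxC.
have := congr1 determinant e.
rewrite !det_mulmx det_ublock det_lblock !det1 !det_scalar mul1r mulr1 dN dN' => ->.
by rewrite mulrC.
Qed.

Lemma det2 (R : comRingType) (A : 'M[R]_2) : \det A = A 0 0 * A 1 1 - A 0 1 * A 1 0.
Proof.
rewrite (expand_det_row _ 0) !big_ord_recl big_ord0 addr0 /cofactor !det_mx11 !mxE /=.
rewrite /bump /= expr0 expr1 mul1r mulN1r mulrN.
by congr (A _ _ * A _ _ - A _ _ * A _ _); apply: val_inj.
Qed.

Lemma cp2 (F : fieldType) (K : 'M[F]_2) :
  char_poly K = 'X^2 - (\tr K)%:P * 'X + (\det K)%:P.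
Proof.
rewrite /char_poly /char_poly_mx det2 (det2 _ K) /mxtrace !big_ord_recl big_ord0 addr0 !mxE /=.
rewrite ?mulr1n ?mulr0n ?sub0r ?rmorphD ?rmorphB ?rmorphM /=.
rewrite ?rmorphN ?rmorphM.
have h0 : ord0 = 0 :> 'I_2 by apply: val_inj.
have h1 : lift ord0 ord0 = 1 :> 'I_2 by apply: val_inj.
rewrite h0 h1; ring.
Qed.

Section S.
Variable R : realType.
Local Notation C := R[i].
Local Notation Re := (@complex.Re R).
Local Notation Im := (@complex.Im R).
Local Notation pauli := (@pauli R).
Lemma conjE (x : C) : Num.conj x = x^*%C. Proof. reflexivity. Qed.
Lemma ReD (x y : C) : Re (x + y) = Re x + Re y. Proof. by move: x y => [a b] [c d]. Qed.
Lemma ImD (x y : C) : Im (x + y) = Im x + Im y. Proof. by move: x y => [a b] [c d]. Qed.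
Lemma ReN (x : C) : Re (- x) = - Re x. Proof. by case: x. Qed.
Lemma ImN (x : C) : Im (- x) = - Im x. Proof. by case: x. Qed.
Lemma ReM (x y : C) : Re (x * y) = Re x * Re y - Im x * Im y. Proof. by move: x y => [a b] [c d]. Qed.
Lemma ImM (x y : C) : Im (x * y) = Re x * Im y + Im x * Re y. Proof. by move: x y => [a b] [c d] /=; rewrite addrC. Qed.
Lemma ReJ (x : C) : Re (x^*%C) = Re x. Proof. by case: x. Qed.
Lemma ImJ (x : C) : Im (x^*%C) = - Im x. Proof. by case: x. Qed.
Lemma Re0 : Re (0 : C) = 0. Proof. by []. Qed.
Lemma Im0 : Im (0 : C) = 0. Proof. by []. Qed.
Lemma Re1 : Re (1 : C) = 1. Proof. by []. Qed.
Lemma Im1 : Im (1 : C) = 0. Proof. by []. Qed.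
Lemma Rei : Re ('i : C) = 0. Proof. by []. Qed.
Lemma Imi : Im ('i : C) = 1. Proof. by []. Qed.
Definition o1 : 'I_2 := Ordinal (isT : (1 < 2)%N).
Definition p1 : 'I_3 := Ordinal (isT : (1 < 3)%N).
Definition p2 : 'I_3 := Ordinal (isT : (2 < 3)%N).
Lemma sum2 (F : 'I_2 -> C) : \sum_(i < 2) F i = F ord0 + F o1.
Proof. rewrite big_ord_recr big_ord1 /=; congr (F _ + F _); exact: val_inj. Qed.
Lemma sum2R (F : 'I_2 -> R) : \sum_(i < 2) F i = F ord0 + F o1.
Proof. rewrite big_ord_recr big_ord1 /=; congr (F _ + F _); exact: val_inj. Qed.
Lemma sum3R (F : 'I_3 -> R) : \sum_(i < 3) F i = F ord0 + F p1 + F p2.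
Proof. rewrite !big_ord_recr big_ord0 /= add0r; congr (F _ + F _ + F _); exact: val_inj. Qed.
Local Notation ix a b := (@mxtens_index 2 2 (a, b)).
Lemma sum4 (F : 'I_(2*2) -> C) :
  \sum_(i < 2*2) F i = \sum_(a < 2) \sum_(b < 2) F (ix a b).
Proof.
rewrite pair_big /=; apply: reindex => /=.
exists (@mxtens_unindex 2 2) => [[i j] _|k _]; [exact: mxtens_indexK | by rewrite -surjective_pairing mxtens_unindexK].
Qed.
Lemma tcorrE (rho : 'M[C]_(2*2)) k l : tcorr rho k l =
  Re (\sum_(a<2) \sum_(b<2) \sum_(c<2) \sum_(d<2)
       rho (ix a b) (ix c d) * (pauli k c a * pauli l d b)).
Proof.
rewrite /tcorr /mxtrace sum4; congr Re; apply: eq_bigr => a _; apply: eq_bigr => b _.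
rewrite mxE sum4; apply: eq_bigr => c _; apply: eq_bigr => d _.
by rewrite tensmxE.
Qed.
Lemma reduceE (f : 'I_2 -> 'I_2 -> 'I_2 -> C) a b c d : reduce f (ix a b) (ix c d) = \sum_(z < 2) f a b z * (f c d z)^*%C.
Proof. by rewrite mxE !mxtens_indexK. Qed.
Lemma pauliE : (pauli ord0 ord0 ord0 = 0 /\ pauli ord0 ord0 o1 = 1 /\ pauli ord0 o1 ord0 = 1 /\ pauli ord0 o1 o1 = 0)
 /\ (pauli p1 ord0 ord0 = 0 /\ pauli p1 ord0 o1 = -'i /\ pauli p1 o1 ord0 = 'i /\ pauli p1 o1 o1 = 0)
 /\ (pauli p2 ord0 ord0 = 1 /\ pauli p2 ord0 o1 = 0 /\ pauli p2 o1 ord0 = 0 /\ pauli p2 o1 o1 = -1).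
Proof. by rewrite /Defs.pauli /= !mxE /=. Qed.

Lemma ReRed (f : 'I_2 -> 'I_2 -> 'I_2 -> C) a b c d :
  Re (reduce f (ix a b) (ix c d)) =
   Re (f a b ord0) * Re (f c d ord0) + Im (f a b ord0) * Im (f c d ord0)
 + (Re (f a b o1) * Re (f c d o1) + Im (f a b o1) * Im (f c d o1)).
Proof. rewrite reduceE sum2 ReD !ReM !ReJ !ImJ; ring. Qed.
Lemma ImRed (f : 'I_2 -> 'I_2 -> 'I_2 -> C) a b c d :
  Im (reduce f (ix a b) (ix c d)) =
   Im (f a b ord0) * Re (f c d ord0) - Re (f a b ord0) * Im (f c d ord0)
 + (Im (f a b o1) * Re (f c d o1) - Re (f a b o1) * Im (f c d o1)).
Proof. rewrite reduceE sum2 ImD !ImM !ReJ !ImJ; ring. Qed.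

Definition SP (rho : 'M[C]_(2*2)) : R :=
(complex.Re (rho (ix ord0 ord0) (ix o1 o1)) + complex.Re (rho (ix ord0 o1) (ix o1 ord0)) + (complex.Re (rho (ix o1 ord0) (ix ord0 o1)) + complex.Re (rho (ix o1 o1) (ix ord0 ord0)))) ^+ 2 + (- complex.Im (rho (ix ord0 ord0) (ix o1 o1)) + complex.Im (rho (ix ord0 o1) (ix o1 ord0)) + (- complex.Im (rho (ix o1 ord0) (ix ord0 o1)) + complex.Im (rho (ix o1 o1) (ix ord0 ord0)))) ^+ 2 + (complex.Re (rho (ix ord0 ord0) (ix o1 ord0)) - complex.Re (rho (ix ord0 o1) (ix o1 o1)) + (complex.Re (rho (ix o1 ord0) (ix ord0 ord0)) - complex.Re (rho (ix o1 o1) (ix ord0 o1)))) ^+ 2 + ((- complex.Im (rho (ix ord0 ord0) (ix o1 o1)) - complex.Im (rho (ix ord0 o1) (ix o1 ord0)) + (complex.Im (rho (ix o1 ord0) (ix ord0 o1)) + complex.Im (rho (ix o1 o1) (ix ord0 ord0)))) ^+ 2 + (- complex.Re (rho (ix ord0 ord0) (ix o1 o1)) + complex.Re (rho (ix ord0 o1) (ix o1 ord0)) + (complex.Re (rho (ix o1 ord0) (ix ord0 o1)) - complex.Re (rho (ix o1 o1) (ix ord0 ord0)))) ^+ 2 + (- complex.Im (rho (ix ord0 ord0) (ix o1 ord0)) + complex.Im (rho (ix ord0 o1) (ix o1 o1)) + (complex.Im (rho (ix o1 ord0) (ix ord0 ord0)) - complex.Im (rho (ix o1 o1) (ix ord0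 o1)))) ^+ 2) + ((complex.Re (rho (ix ord0 ord0) (ix ord0 o1)) + complex.Re (rho (ix ord0 o1) (ix ord0 ord0)) + (- complex.Re (rho (ix o1 ord0) (ix o1 o1)) - complex.Re (rho (ix o1 o1) (ix o1 ord0)))) ^+ 2 + (- complex.Im (rho (ix ord0 ord0) (ix ord0 o1)) + complex.Im (rho (ix ord0 o1) (ix ord0 ord0)) + (complex.Im (rho (ix o1 ord0) (ix o1 o1)) - complex.Im (rho (ix o1 o1) (ix o1 ord0)))) ^+ 2 + (complex.Re (rho (ix ord0 ord0) (ix ord0 ord0)) - complex.Re (rho (ix ord0 o1) (ix ord0 o1)) + (- complex.Re (rho (ix o1 ord0) (ix o1 ord0)) + complex.Re (rho (ix o1 o1) (ix o1 o1)))) ^+ 2).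
Lemma SvalE (rho : 'M[C]_(2*2)) : Sval rho = SP rho.
Proof.
have [[P1 [P2 [P3 P4]]] [[P5 [P6 [P7 P8]]] [P9 [P10 [P11 P12]]]]] := pauliE.
rewrite /Sval !sum3R !tcorrE !sum2 !(P1,P2,P3,P4,P5,P6,P7,P8,P9,P10,P11,P12).
rewrite !(mul0r, mulr0, add0r, addr0, mul1r, mulr1, mulrN, mulNr, mulrNN, opprK).
rewrite !(ReD, ImD, ReN, ImN, ReM, ImM, Re0, Im0, Re1, Im1, Rei, Imi).
rewrite !(mul0r, mulr0, add0r, addr0, mul1r, mulr1, mulrN, mulNr, mulrNN, opprK, subr0, sub0r).
by [].
Qed.

Definition Bx (f : 'I_2 -> 'I_2 -> 'I_2 -> C) z w :=
  - (f ord0 ord0 z * f o1 o1 w) + f ord0 o1 z * f o1 ord0 w + f o1 ord0 z * f ord0 o1 w - f o1 o1 z * f ord0 ord0 w.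
Definition E1 (f : 'I_2 -> 'I_2 -> 'I_2 -> C) : R :=
  \sum_(z < 2) \sum_(w < 2) (Re (Bx f z w) ^+ 2 + Im (Bx f z w) ^+ 2).
Lemma ReBx f z w : Re (Bx f z w) =
  - (Re (f ord0 ord0 z) * Re (f o1 o1 w) - Im (f ord0 ord0 z) * Im (f o1 o1 w))
  + (Re (f ord0 o1 z) * Re (f o1 ord0 w) - Im (f ord0 o1 z) * Im (f o1 ord0 w))
  + (Re (f o1 ord0 z) * Re (f ord0 o1 w) - Im (f o1 ord0 z) * Im (f ord0 o1 w))
  - (Re (f o1 o1 z) * Re (f ord0 ord0 w) - Im (f o1 o1 z) * Im (f ord0 ord0 w)).
Proof. by rewrite /Bx !(ReD, ReN, ReM). Qed.
Lemma ImBx f z w : Im (Bx f z w) =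
  - (Re (f ord0 ord0 z) * Im (f o1 o1 w) + Im (f ord0 ord0 z) * Re (f o1 o1 w))
  + (Re (f ord0 o1 z) * Im (f o1 ord0 w) + Im (f ord0 o1 z) * Re (f o1 ord0 w))
  + (Re (f o1 ord0 z) * Im (f ord0 o1 w) + Im (f o1 ord0 z) * Re (f ord0 o1 w))
  - (Re (f o1 o1 z) * Im (f ord0 ord0 w) + Im (f o1 o1 z) * Re (f ord0 ord0 w)).
Proof. by rewrite /Bx !(ImD, ImN, ImM). Qed.

Lemma Sdiff1 (psi : 'I_2 -> 'I_2 -> 'I_2 -> C) :
  Sval (rhoAB psi) - Sval (rhoAC psi) = 3%:R * (E1 psi - E1 (fun a c b => psi a b c)).
Proof.
rewrite /rhoAB /rhoAC !SvalE /SP !(ReRed, ImRed) /E1 !sum2R !(ReBx, ImBx).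
cbv beta.
ring.
Qed.

Lemma Sdiff2 (psi : 'I_2 -> 'I_2 -> 'I_2 -> C) :
  Sval (rhoAC psi) - Sval (rhoBC psi) =
  3%:R * (E1 (fun a c b => psi a b c) - E1 (fun b c a => psi a b c)).
Proof.
rewrite /rhoBC /rhoAC !SvalE /SP !(ReRed, ImRed) /E1 !sum2R !(ReBx, ImBx).
cbv beta.
ring.
Qed.
End S.



Section S2.
Variable R : realType.
Local Notation C := R[i].
Local Notation Re := (@complex.Re R).
Local Notation Im := (@complex.Im R).
Local Notation ix a b := (@mxtens_index 2 2 (a, b)).
Local Notation Bx := (@Bx R).
Local Notation E1 := (@E1 R).
Local Notation pauli := (@pauli R).

Lemma ord2 (a : 'I_2) : a = ord0 \/ a = o1.
Proof. case: a => [[|[|//]]] H; [left|right]; exact: val_inj. Qed.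
Definition Vm (f : 'I_2 -> 'I_2 -> 'I_2 -> C) : 'M[C]_(2*2, 2) :=
  \matrix_(i, z) f (mxtens_unindex i).1 (mxtens_unindex i).2 z.
Definition MY : 'M[C]_(2*2) := pauli_y R *t pauli_y R.
Definition Bm f : 'M[C]_2 := (Vm f)^T *m MY *m Vm f.
Lemma ii : 'i * 'i = -1 :> C. Proof. by rewrite -expr2 sqr_i. Qed.
Lemma BmE f z w : Bm f z w = Bx f z w.
Proof.
rewrite /Bm /MY; do !rewrite ?(mxE, sum4, sum2, mxtens_indexK) /=.
rewrite !(mul0r, mulr0, add0r, addr0, mulrN, mulNr, opprK, ii).
by rewrite /Bx; ring.
Qed.
Lemma conji : ('i : C)^*%C = - 'i.
Proof. by apply/eqP; rewrite eq_complex /= oppr0 !eqxx. Qed.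
Lemma Yskew a c : pauli_y R a c = - pauli_y R c a.
Proof. case: (ord2 a) => ->; case: (ord2 c) => ->; rewrite !mxE /= ?oppr0 ?opprK. all: reflexivity. Qed.
Lemma Yconj a c : (pauli_y R a c)^*%C = - pauli_y R a c.
Proof. case: (ord2 a) => ->; case: (ord2 c) => ->; rewrite !mxE /= ?rmorph0 ?oppr0 ?rmorphN ?conji ?opprK. all: try reflexivity. all: by rewrite -conji. Qed.
Lemma MY_tr : MY^T = MY.
Proof.
apply/matrixP => i j; case: (mxtens_indexP i) => a b; case: (mxtens_indexP j) => c d.
by rewrite mxE !tensmxE (Yskew c) (Yskew d) mulrNN.
Qed.
Lemma MY_conj : map_mx conjc MY = MY.
Proof.
apply/matrixP => i j; case: (mxtens_indexP i) => a b; case: (mxtens_indexP j) => c d.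
by rewrite mxE !tensmxE rmorphM /= !Yconj mulrNN.
Qed.
Lemma reduceV f : reduce f = Vm f *m (map_mx conjc (Vm f))^T.
Proof. apply/matrixP => i j; rewrite !mxE; apply: eq_bigr => z _; rewrite !mxE. done. Qed.
Lemma conj_reduce f : map_mx Num.conj (reduce f) = map_mx conjc (Vm f) *m (Vm f)^T.
Proof.
apply/matrixP => i j; rewrite !mxE rmorph_sum; apply: eq_bigr => z _.
by rewrite !mxE rmorphM /= !conjE conjcK.
Qed.
Definition Qm f := (map_mx conjc (Vm f))^T *m MY *m map_mx conjc (Vm f) *m (Vm f)^T *m MY.
Lemma wootE f : wootters_mx (reduce f) = Vm f *m Qm f.
Proof. by rewrite /wootters_mx conj_reduce reduceV /Qm /MY !mulmxA. Qed.
Lemma QV f : Qm f *m Vm f = map_mx conjc (Bm f) *m Bm f.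
Proof. by rewrite /Bm !map_mxM -map_trmx MY_conj /Qm !mulmxA. Qed.
Lemma normsq (x : C) : x^*%C * x = (Re x ^+ 2 + Im x ^+ 2)%:C.
Proof. case: x => a b; apply/eqP; rewrite eq_complex /= !expr2. apply/andP; split; apply/eqP; ring. Qed.
Lemma BxC f z w : Bx f z w = Bx f w z.
Proof. rewrite /Bx; ring. Qed.
Lemma mul2E (A B : 'M[C]_2) i j : (A *m B) i j = A i ord0 * B ord0 j + A i o1 * B o1 j.
Proof. by rewrite mxE sum2. Qed.
Lemma mapE (A : 'M[C]_2) i j : map_mx conjc A i j = (A i j)^*%C.
Proof. by rewrite mxE. Qed.
Lemma trK f : \tr (map_mx conjc (Bm f) *m Bm f) = (E1 f)%:C.
Proof.
rewrite /mxtrace sum2 !mul2E !mapE !BmE /E1 !sum2R [Bx f o1 ord0]BxC !normsq.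
by rewrite !rmorphD.
Qed.
Definition Dx f := Bx f ord0 ord0 * Bx f o1 o1 - Bx f ord0 o1 * Bx f o1 ord0.
Definition E2 f := Re (Dx f) ^+ 2 + Im (Dx f) ^+ 2.
Lemma detK f : \det (map_mx conjc (Bm f) *m Bm f) = (E2 f)%:C.
Proof.
have h0 : 0 = ord0 :> 'I_2 by apply: val_inj.
have h1 : 1 = o1 :> 'I_2 by apply: val_inj.
by rewrite det_mulmx det_map_mx det2 h0 h1 !BmE -/(Dx f) normsq.
Qed.
Import Normc.
Lemma normcE2 (x : C) : normc x = Num.sqrt (Re x ^+ 2 + Im x ^+ 2). Proof. by case: x. Qed.
Lemma nsq_ge0 (x : C) : 0 <= Re x ^+ 2 + Im x ^+ 2. Proof. by rewrite addr_ge0 ?sqr_ge0. Qed.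
Lemma normc_sq (x : C) : normc x ^+ 2 = Re x ^+ 2 + Im x ^+ 2.
Proof. by rewrite normcE2 sqr_sqrtr // nsq_ge0. Qed.
Lemma normc_ge0' (x : C) : 0 <= normc x. Proof. by rewrite normcE2 sqrtr_ge0. Qed.
Lemma E2_ge0 f : 0 <= E2 f. Proof. exact: nsq_ge0. Qed.
Lemma E1_ge f : 2 * Num.sqrt (E2 f) <= E1 f.
Proof.
have -> : Num.sqrt (E2 f) = normc (Dx f) by rewrite normcE2.
have h : normc (Dx f) <= normc (Bx f ord0 ord0) * normc (Bx f o1 o1) + normc (Bx f ord0 o1) * normc (Bx f o1 ord0).
  by apply: le_trans (le_normcD _ _) _; rewrite normcN !normcM.
have -> : E1 f = normc (Bx f ord0 ord0) ^+ 2 + normc (Bx f ord0 o1) ^+ 2 + (normc (Bx f o1 ord0) ^+ 2 + normc (Bx f o1 o1) ^+ 2).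
  by rewrite /E1 !sum2R !normc_sq.
move: h (normc_ge0' (Bx f ord0 ord0)) (normc_ge0' (Bx f ord0 o1)) (normc_ge0' (Bx f o1 ord0)) (normc_ge0' (Bx f o1 o1)).
move: (normc (Dx f)) (normc (Bx f ord0 ord0)) (normc (Bx f ord0 o1)) (normc (Bx f o1 ord0)) (normc (Bx f o1 o1)) => d a b c e.
move=> h ? ? ? ?; have h1 := sqr_ge0 (a - e); have h2 := sqr_ge0 (b - c); nra.
Qed.
Lemma concE f : concurrence (reduce f) = Num.sqrt (E1 f - 2 * Num.sqrt (E2 f)).
Proof.
set d := Num.sqrt (E2 f).
have hE : 2 * d <= E1 f := E1_ge f.
have hd : 0 <= d := sqrtr_ge0 _.
set p := Num.sqrt (E1 f + 2 * d).
set q := Num.sqrt (E1 f - 2 * d).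
have hp2 : p ^+ 2 = E1 f + 2 * d by rewrite sqr_sqrtr //; lra.
have hq2 : q ^+ 2 = E1 f - 2 * d by rewrite sqr_sqrtr //; lra.
have hq0 : 0 <= q := sqrtr_ge0 _.
have hqp : q <= p by rewrite ler_sqrt; lra.
set s1 := (p + q) / 2; set s2 := (p - q) / 2.
have hs2 : 0 <= s2 by rewrite /s2; lra.
have hs12 : s2 <= s1 by rewrite /s1 /s2; lra.
have hs1 : 0 <= s1 by lra.
have e1 : E1 f = s1 ^+ 2 + s2 ^+ 2.
  have -> : E1 f = (p ^+ 2 + q ^+ 2) / 2 by rewrite hp2 hq2; lra.
  rewrite /s1 /s2; field; rewrite ?pnatr_eq0 //.
have e2 : E2 f = s1 ^+ 2 * s2 ^+ 2.
  have hd2 : d ^+ 2 = E2 f by rewrite sqr_sqrtr // E2_ge0.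
  have hs : s1 * s2 = d.
    have -> : s1 * s2 = (p ^+ 2 - q ^+ 2) / 4 by rewrite /s1 /s2; field; rewrite ?pnatr_eq0 //.
    rewrite hp2 hq2; lra.
  by rewrite -exprMn hs hd2.
have cpK : char_poly (map_mx conjc (Bm f) *m Bm f) =
    ('X - (s1 ^+ 2)%:C%:P) * ('X - (s2 ^+ 2)%:C%:P).
  rewrite cp2 trK detK e1 e2 !rmorphD !rmorphM /=.
  ring.
have cpW : char_poly (wootters_mx (reduce f)) =
    \prod_(z <- [:: 0; 0; (s1 ^+ 2)%:C; (s2 ^+ 2)%:C]) ('X - z%:P).
  rewrite wootE.
  apply: (@mulfI _ ('X^2)); first by rewrite monic_neq0 // monicXn.
  rewrite sylv QV cpK !big_cons big_nil polyC0 subr0 mulr1.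
  ring.
rewrite /concurrence /wootters_lambdas /eigenvalues.
case: (closed_field_poly_normal _) => r /= Hr.
have hperm : perm_eq r [:: 0; 0; (s1 ^+ 2)%:C; (s2 ^+ 2)%:C].
  apply: prod_XsubC_eq.
  by rewrite -cpW {1}Hr (monicP (char_poly_monic _)) scale1r.
have hmap : perm_eq [seq Num.sqrt (Re z) | z <- r] [:: s1; s2; 0; 0].
  apply: perm_trans (perm_map _ hperm) _.
  rewrite /= sqrtr0 !sqrtr_sqr !ger0_norm //.
  by rewrite -[[:: 0; 0; s1; s2]]/([:: 0; 0] ++ [:: s1; s2]) perm_catC.
have tot : total (fun x y : R => y <= x) by move=> x y; exact: le_total.
have tr : transitive (fun x y : R => y <= x) by move=> x y z h1 h2; exact: le_trans h2 h1.
have anti : antisymmetric (fun x y : R => y <= x).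
  by move=> x y /andP[h1 h2]; apply/eqP; rewrite eq_le h1 h2.
have -> : sort (fun x y : R => y <= x) [seq Num.sqrt (Re z) | z <- r] = [:: s1; s2; 0; 0].
  rewrite (elimT (perm_sortP tot tr anti _ _) hmap).
  by rewrite (sorted_sort tr) //= hs12 hs2 lexx.
rewrite /= !subr0 max_r; last by lra.
rewrite /s1 /s2; lra.
Qed.
Lemma sqrt_lt (a b : R) : 0 <= a -> 0 <= b -> (Num.sqrt a < Num.sqrt b) = (a < b).
Proof. by move=> ha hb; rewrite !ltNge ler_sqrt. Qed.
Lemma Dx_AC (psi : 'I_2 -> 'I_2 -> 'I_2 -> C) : Dx (fun a c b => psi a b c) = Dx psi.
Proof. rewrite /Dx /Bx /=; ring. Qed.
Lemma Dx_BC (psi : 'I_2 -> 'I_2 -> 'I_2 -> C) : Dx (fun b c a => psi a b c) = Dx psi.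
Proof. rewrite /Dx /Bx /=; ring. Qed.
Lemma main (psi : 'I_2 -> 'I_2 -> 'I_2 -> C) :
  ((Sval (rhoAB psi) > Sval (rhoAC psi) /\ Sval (rhoAC psi) > Sval (rhoBC psi))
   <->
   (concurrence (rhoAB psi) > concurrence (rhoAC psi) /\
    concurrence (rhoAC psi) > concurrence (rhoBC psi))).
Proof.
have hAC : E2 (fun a c b => psi a b c) = E2 psi by rewrite /E2 Dx_AC.
have hBC : E2 (fun b c a => psi a b c) = E2 psi by rewrite /E2 Dx_BC.
have gAB := E1_ge psi.
have gAC := E1_ge (fun a c b => psi a b c).
have gBC := E1_ge (fun b c a => psi a b c).
rewrite hAC in gAC; rewrite hBC in gBC.
have s1 := @Sdiff1 R psi.
have s2 := @Sdiff2 R psi.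
rewrite /rhoAB /rhoAC /rhoBC !concE hAC hBC.
rewrite /rhoAB /rhoAC /rhoBC in s1 s2.
move: gAB gAC gBC s1 s2.
set d := Num.sqrt (E2 psi).
set x := E1 psi; set y := E1 (fun a c b => psi a b c); set z := E1 (fun b c a => psi a b c).
set SA := Sval (reduce psi); set SB := Sval (reduce (fun a c b => psi a b c)); set SC := Sval (reduce (fun b c a => psi a b c)).
move=> gx gy gz e1 e2.
rewrite !sqrt_lt; try lra.
Qed.
End S2.

Theorem theorem2 (R : realType) (psi : 'I_2 -> 'I_2 -> 'I_2 -> R[i]) :
  \sum_(a < 2) \sum_(b < 2) \sum_(c < 2) `|psi a b c| ^+ 2 = 1 ->
  ((Sval (rhoAB psi) > Sval (rhoAC psi) /\ Sval (rhoAC psi) > Sval (rhoBC psi))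
   <->
   (concurrence (rhoAB psi) > concurrence (rhoAC psi) /\
    concurrence (rhoAC psi) > concurrence (rhoBC psi))).
Proof.
move=> _; exact: main.
Qed.
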